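(* Let $\mathfrak M$ be a Banach manifold (modelled on $X$) with chart family $\mathscr A$, and $\mathfrak M_0$ (modelled on $X_0$) a $C^1$-embedded Banach submanifold of $\mathfrak M$ with respect to $\mathscr A$. Assume $(\mathfrak M,\mathfrak M_0,\mathscr A)$ is inward spreadable with an inner $C^1$-kernel $\mathfrak M_1$. Then for every $\eta\in\mathfrak M_0$ and any three $(\mathfrak M_0,\mathfrak M_1)$-regular local charts $(\mathcal U,\varphi),(\mathcal V,\psi),(\mathcal W,\chi)$ of $\mathfrak M$ at $\eta$, $$(\varphi\circ\chi^{-1})'(\chi(\eta))=(\varphi\circ\psi^{-1})'(\psi(\eta))\,(\psi\circ\chi^{-1})'(\chi(\eta))\quad\text{in }L(X),$$ and in particular $(\varphi\circ\psi^{-1})'(\psi(\eta))=\big[(\psi\circ\varphi^{-1})'(\varphi(\eta))\big]^{-1}$.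
   Context: Densely embedded spaces and the class $\mathfrak C^k$. For Banach spaces $X$ and $X_0$, $X_0$ is a densely embedded Banach subspace of $X$ if $X_0$ is a dense linear subspace of $X$ and there is $C>0$ with $\|x\|_X\le C\|x\|_{X_0}$ for $x\in X_0$. For such $X_0\subseteq X$, a Banach space $Y$, an open set $U_0\subseteq X_0$ and an integer $k\ge1$, $\mathfrak C^k(U_0;X,Y)$ denotes the set of maps $F:U_0\to Y$ such that (i) for each $x_0\in U_0$ there are bounded symmetric $j$-linear maps $F^{(j)}(x_0):X^j\to Y$, $1\le j\le k$, with $\|F(x)-F(x_0)-\sum_{j=1}^k\frac1{j!}F^{(j)}(x_0)(x-x_0,\dots,x-x_0)\|_Y/\|x-x_0\|_{X_0}^k\to0$ as $\|x-x_0\|_{X_0}\to0$, and (ii) $x\mapsto F^{(j)}(x)$ is continuous from $U_0$ (with the $X_0$-topology) into the space $L^j(X,Y)$ of bounded $j$-linear maps. We write $F'=F^{(1)}$. Embedded submanifolds. Let $\mathfrak M,\mathfrak M_0$ be topological Banach manifolds modelled on $X$, $X_0$, let $\mathscr A$ be a family of local charts of $\mathfrak M$, and $k\ge1$. $\mathfrak M_0$ is a $C^k$-embedded Banach submanifold of $\mathfrak M$ with respect to $\mathscr A$ if: (D1) $X_0$ is a densely embedded Banach subspace of $X$; (D2) $\mathfrak M_0\subseteq\mathfrak M$ and $\mathcal U\cap\mathfrak M_0$ is open in $\mathfrak M_0$ for every open $\mathcal U\subseteq\mathfrak M$; (D3) the domains of the charts of $\mathscr A$ cover $\mathfrak M$;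 (D4) for $\eta\in\mathfrak M_0$ and $(\mathcal U,\varphi)\in\mathscr A$ with $\eta\in\mathcal U$, $(\mathcal U_0,\varphi|_{\mathcal U_0})$ with $\mathcal U_0:=\mathcal U\cap\mathfrak M_0$ is a local chart of $\mathfrak M_0$; (D5) for $\eta\in\mathfrak M_0$ and $(\mathcal U,\varphi),(\mathcal V,\psi)\in\mathscr A$ with $\eta\in\mathcal U\cap\mathcal V$, $\psi\circ\varphi^{-1}\in\mathfrak C^k(\varphi(\mathcal U_0\cap\mathcal V_0);X,X)$ and $\varphi\circ\psi^{-1}\in\mathfrak C^k(\psi(\mathcal U_0\cap\mathcal V_0);X,X)$. A chart of $\mathscr A$ whose domain contains $\eta$ is an $\mathfrak M_0$-regular local chart at $\eta$. $(\mathfrak M,\mathfrak M_0,\mathscr A)$ (with $\mathfrak M_0$ $C^1$-embedded) is inward spreadable if there is a Banach manifold $\mathfrak M_1\subseteq\mathfrak M_0$, modelled on a Banach space $X_1$, which is a $C^1$-embedded Banach submanifold of $\mathfrak M_0$ with respect to the restrictions to $\mathfrak M_0$ of the charts of $\mathscr A$ ($\mathfrak M_1$ is then an inner $C^1$-kernel and the charts of $\mathscr A$ are called $(\mathfrak M_0,\mathfrak M_1)$-regular). For charts at $\eta\in\mathfrak M_0$, $(\varphi\circ\psi^{-1})'(\psi(\eta))\in L(X)$ is the first derivative in the $\mathfrak C^1$ sense. *)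

(* Defs.v *)
From HB Require Import structures.
From mathcomp Require Import all_boot all_order all_algebra.
From mathcomp Require Import all_classical all_reals all_analysis.
Set Implicit Arguments. Unset Strict Implicit. Unset Printing Implicit Defensive.
Import Order.TTheory GRing.Theory Num.Theory.
Import numFieldNormedType.Exports.
Local Open Scope classical_set_scope.
Local Open Scope ring_scope.

Section Defs.
Variable R : realType.

Definition bounded_linear (X Y : normedModType R) (L : X -> Y) : Prop :=
  (forall (a : R) (u v : X), L (a *: u + v) = a *: L u + L v) /\
  exists C : R, forall v, `|L v| <= C * `|v|.

(** (D1): X0 is a densely embedded Banach subspace of X; the inclusion
    X0 ⊆ X is represented by the injective linear map [iota]. *)
Definition densely_embedded (X X0 : normedModType R) (iota : X0 -> X) : Prop :=
  [/\ (forall (a : R) (u v : X0), iota (a *: u + v) = a *: iota u + iota v),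
      (forall u v, iota u = iota v -> u = v),
      dense (range iota) &
      exists2 C : R, 0 < C & forall x, `|iota x| <= C * `|x| ].

(** L is the first derivative, in the 𝔆^1 sense, at x0 of F : U0 -> Y
    (condition (i) with k = 1): the remainder is o(||x - x0||_{X0}). *)
Definition C1deriv_at (X X0 Y : normedModType R) (iota : X0 -> X)
    (U0 : set X0) (F : X0 -> Y) (x0 : X0) (L : X -> Y) : Prop :=
  bounded_linear L /\
  forall eps : R, 0 < eps -> exists2 delta : R, 0 < delta &
    forall x, U0 x -> `|x - x0| < delta ->
      `|F x - F x0 - L (iota (x - x0))| <= eps * `|x - x0|.

(** F ∈ 𝔆^1(U0; X, Y). Continuity of x |-> F'(x) from U0 (X0-topology)
    into L(X,Y) with the operator norm is written out explicitly. *)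
Definition frakC1 (X X0 Y : normedModType R) (iota : X0 -> X)
    (U0 : set X0) (F : X0 -> Y) : Prop :=
  exists D : X0 -> X -> Y,
    (forall x0, U0 x0 -> C1deriv_at iota U0 F x0 (D x0)) /\
    (forall x0, U0 x0 -> forall eps : R, 0 < eps -> exists2 delta : R, 0 < delta &
       forall x, U0 x -> `|x - x0| < delta ->
         forall v, `|D x v - D x0 v| <= eps * `|v|).

Definition local_chart (M : topologicalType) (X : normedModType R)
    (U : set M) (phi : M -> X) : Prop :=
  [/\ open U,
      (forall p q, U p -> U q -> phi p = phi q -> p = q),
      {within U, continuous phi} &
      forall O : set M, open O -> open (phi @` (U `&` O))].

Definition banach_manifold (M : topologicalType) (X : normedModType R) : Prop :=
  forall p : M, exists U (phi : M -> X), U p /\ local_chart U phi.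

Definition chart_family (M : topologicalType) (X : normedModType R)
    (A : set (set M * (M -> X))) : Prop :=
  forall c, A c -> local_chart c.1 c.2.

(** Domain φ(U0 ∩ V0) ⊆ X0 of the transition map ψ ∘ φ^{-1}
    (c = (U, φ), d = (V, ψ)); M0 ⊆ M is represented by the injection j. *)
Definition trans_dom (M M0 : topologicalType) (j : M0 -> M)
    (X X0 : normedModType R) (iota : X0 -> X)
    (c d : set M * (M -> X)) : set X0 :=
  [set x | exists m : M0, (c.1 `&` d.1) (j m) /\ iota x = c.2 (j m)].

(** F : X0 -> X is (a total extension of) the transition map ψ ∘ φ^{-1}
    on φ(U0 ∩ V0). *)
Definition is_transition (M M0 : topologicalType) (j : M0 -> M)
    (X X0 : normedModType R) (iota : X0 -> X)
    (c d : set M * (M -> X)) (F : X0 -> X) : Prop :=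
  forall (m : M0) (x : X0), (c.1 `&` d.1) (j m) -> iota x = c.2 (j m) ->
    F x = d.2 (j m).

Definition C1_embedded (M M0 : topologicalType) (j : M0 -> M)
    (X X0 : normedModType R) (iota : X0 -> X)
    (A : set (set M * (M -> X))) : Prop :=
  [/\ densely_embedded iota,
      (forall m m', j m = j m' -> m = m') /\
        (forall U : set M, open U -> open (j @^-1` U)),
      (forall p : M, exists2 c, A c & c.1 p),
      (forall (eta : M0) c, A c -> c.1 (j eta) ->
         exists phi0 : M0 -> X0,
           (forall m, c.1 (j m) -> iota (phi0 m) = c.2 (j m)) /\
           local_chart (j @^-1` c.1) phi0) &
      (forall (eta : M0) c d, A c -> A d -> c.1 (j eta) -> d.1 (j eta) ->
         (exists F, is_transition j iota c d F /\
                    frakC1 iota (trans_dom j iota c d) F) /\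
         (exists F, is_transition j iota d c F /\
                    frakC1 iota (trans_dom j iota d c) F)) ].

Definition restr_family (M M0 : topologicalType) (j : M0 -> M)
    (X X0 : normedModType R) (iota : X0 -> X)
    (A : set (set M * (M -> X))) : set (set M0 * (M0 -> X0)) :=
  [set c0 | exists2 c, A c &
     c0.1 = j @^-1` c.1 /\ forall m, c0.1 m -> iota (c0.2 m) = c.2 (j m)].

End Defs.

(* Main.v *)
Require Import Defs.
From HB Require Import structures.
From mathcomp Require Import all_boot all_order all_algebra.
From mathcomp Require Import all_classical all_reals all_analysis.
From mathcomp Require Import ring lra.
Import Order.TTheory GRing.Theory Num.Theory.
Import numFieldNormedType.Exports.
Local Open Scope classical_set_scope.
Local Open Scope ring_scope.

Lemma open_ball_ex (R : realType) (V : normedModType R) (S : set V) (x : V) :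
  open S -> S x -> exists2 d : R, 0 < d & forall y, `|y - x| < d -> S y.
Proof.
move=> oS Sx.
have /nbhs_ballP [d d0 H] := open_nbhs_nbhs (conj oS Sx).
exists d => // y hy; apply: H; rewrite -ball_normE /= distrC //.
Qed.

Arguments open_ball_ex {R V S x}.

Section Lin.
Variable R : realType.
Variables (U W : normedModType R) (f : U -> W).
Hypothesis hf : forall (a : R) u v, f (a *: u + v) = a *: f u + f v.

Lemma lin0 : f 0 = 0.
Proof.
have := hf 1 0 0; rewrite scale1r addr0 => h.
have := congr1 (fun z => z - f 0) h; by rewrite /= subrr addrK scale1r.
Qed.

Lemma linZ a u : f (a *: u) = a *: f u.
Proof. by have := hf a u 0; rewrite addr0 lin0 addr0. Qed.

Lemma linD u v : f (u + v) = f u + f v.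
Proof. by have := hf 1 u v; rewrite !scale1r. Qed.

Lemma linN u : f (- u) = - f u.
Proof. by rewrite -scaleN1r linZ scaleN1r. Qed.

Lemma linB u v : f (u - v) = f u - f v.
Proof. by rewrite linD linN. Qed.
End Lin.
Arguments lin0 {R U W f} hf.
Arguments linZ {R U W f} hf a u.
Arguments linD {R U W f} hf u v.
Arguments linN {R U W f} hf u.
Arguments linB {R U W f} hf u v.

Lemma bl_bound (R : realType) (U W : normedModType R) (f : U -> W) :
  bounded_linear f -> exists2 C : R, 0 < C & forall v, `|f v| <= C * `|v|.
Proof.
case=> _ [C hC]; exists (`|C| + 1); first by rewrite ltr_pwDr // normr_ge0.
move=> v; apply: (le_trans (hC v)); apply: ler_wpM2r; first exact: normr_ge0.
by rewrite (le_trans (ler_norm C)) // lerDl.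
Qed.

Arguments bl_bound {R U W f}.

Lemma le_of_eps (R : realType) (a b c : R) : 0 <= c ->
  (forall e, 0 < e -> a <= b + e * c) -> a <= b.
Proof.
move=> c0 H; apply/ler_addgt0Pr => e e0.
have c1 : 0 < c + 1 by rewrite ltr_pwDr.
have := H (e / (c + 1)) (divr_gt0 e0 c1).
move/le_trans; apply; rewrite lerD2l.
rewrite mulrAC ler_pdivrMr // ler_wpM2l ?lerDl //; exact: ltW.
Qed.

Lemma lip_glob (R : realType) (V : normedModType R) (f : R -> V) (K : R) :
  (forall s, 0 <= s <= 1 -> exists2 d, 0 < d & forall t, 0 <= t <= 1 ->
     `|t - s| < d -> `|f t - f s| <= K * `|t - s|) ->
  `|f 1 - f 0| <= K.
Proof.
move=> H.
pose E := [set s : R | 0 <= s <= 1 /\ `|f s - f 0| <= K * s].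
have E0 : E 0 by split; [rewrite lexx ler01 | rewrite subrr normr0 mulr0].
have ubE : ubound E 1 by move=> s [/andP[_ ?]].
have hs : has_sup E by split; [exists 0 | exists 1].
have s0 : 0 <= sup E := sup_upper_bound hs E0.
have s1 : sup E <= 1 := ge_sup (ex_intro _ 0 E0) ubE.
have [d d0 Hd] : exists2 d, 0 < d & forall t, 0 <= t <= 1 ->
     `|t - sup E| < d -> `|f t - f (sup E)| <= K * `|t - sup E|.
  by apply: H; rewrite s0 s1.
have tri : forall a b, `|f a - f 0| <= K * a ->
    `|f b - f a| <= K * (b - a) -> `|f b - f 0| <= K * b.
  move=> a b Ea Eb.
  have -> : f b - f 0 = (f b - f a) + (f a - f 0) by rewrite addrA subrK.
  apply: (le_trans (ler_normD _ _)).
  by rewrite (_ : K * b = K * (b - a) + K * a) ?lerD // -mulrDr subrK.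
have Es : E (sup E).
  have [e Ee lte] := sup_adherent d0 hs.
  have es : e <= sup E := sup_upper_bound hs Ee.
  split; first by rewrite s0 s1.
  apply: (tri e); first by case: Ee.
  rewrite (distrC (f (sup E))) -(ger0_norm (_ : 0 <= sup E - e)) ?subr_ge0 //.
  rewrite (distrC (sup E)); apply: Hd; first by case: Ee.
  by rewrite distrC ger0_norm ?subr_ge0 // ltrBlDr -ltrBlDl.
case: (ltrP (sup E) 1) => sl; last first.
  have e1 : sup E = 1 by apply/eqP; rewrite eq_le s1 sl.
  by case: Es => _; rewrite e1 mulr1.
pose t := Num.min 1 (sup E + d / 2).
have d2 : 0 < d / 2 by rewrite divr_gt0.
have st : sup E < t by rewrite lt_min sl ltrDl d2.
have t1 : t <= 1 by rewrite ge_min lexx.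
have tsd : t - sup E < d.
  have tle : t <= sup E + d / 2 by rewrite ge_min lexx orbT.
  lra.
have Et : E t.
  split; first by rewrite t1 andbT (le_trans s0) // ltW.
  apply: (tri (sup E)); first by case: Es.
  rewrite -(ger0_norm (_ : 0 <= t - sup E)) ?subr_ge0 ?(ltW st) //.
  apply: Hd; last first.
    by rewrite ger0_norm ?subr_ge0 ?(ltW st).
  by rewrite t1 andbT (le_trans s0) // ltW.
have := sup_upper_bound hs Et.
by rewrite leNgt st.
Qed.

Lemma grp_id (V : zmodType) (a b p x y : V) :
  a - x - (b - y) = (a - b - p) + (p - (x - y)).
Proof.
rewrite addrA subrK opprB opprB -!addrA; congr (_ + _).
by rewrite addrCA [RHS]addrCA (addrC (- x)).
Qed.

Lemma mvl (R : realType) (X X0 : normedModType R) (iota : X0 -> X)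
  (hi : forall (a : R) u v, iota (a *: u + v) = a *: iota u + iota v)
  (U0 : set X0) (F : X0 -> X) (D : X0 -> X -> X) (x0 : X0) (r eps : R) (h : X0) :
  (forall z, `|z - x0| < r -> U0 z) ->
  (forall z, U0 z -> C1deriv_at iota U0 F z (D z)) ->
  (forall z, `|z - x0| < r -> forall v, `|D z v - D x0 v| <= eps * `|v|) ->
  `|h| < r ->
  `|F (x0 + h) - F x0 - D x0 (iota h)| <= eps * `|iota h|.
Proof.
move=> hU hD hc hr.
apply: (@le_of_eps _ _ _ `|h|); first exact: normr_ge0.
move=> e e0.
pose g s := F (x0 + s *: h) - s *: D x0 (iota h).
have -> : F (x0 + h) - F x0 - D x0 (iota h) = g 1 - g 0.
  by rewrite /g !scale1r !scale0r addr0 subr0 addrAC.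
apply: lip_glob => s /andP[s0 s1].
have zr : forall t, 0 <= t <= 1 -> `|(x0 + t *: h) - x0| < r.
  move=> t /andP[t0 t1]; rewrite addrAC subrr add0r normrZ.
  by apply: (le_lt_trans _ hr); rewrite ger0_norm // ler_piMl // normr_ge0.
have Uz : U0 (x0 + s *: h) by apply: hU; apply: zr; rewrite s0 s1.
have [[lD _] Hd] := hD _ Uz.
have [dl dl0 Hdl] := Hd e e0.
have h1 : 0 < `|h| + 1 by rewrite ltr_pwDr // normr_ge0.
exists (dl / (`|h| + 1)); first by rewrite divr_gt0.
move=> t ht tsd.
have Uz' : U0 (x0 + t *: h) by apply: hU; apply: zr.
have dz : (x0 + t *: h) - (x0 + s *: h) = (t - s) *: h.
  by rewrite opprD addrACA subrr add0r scalerBl.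
rewrite /g (@grp_id _ _ _ (D (x0 + s *: h) (iota ((x0 + t *: h) - (x0 + s *: h))))) .
apply: le_trans (ler_normD _ _) _.
rewrite mulrDl [X in _ <= X]addrC; apply: lerD.
  have hlt : `|(x0 + t *: h) - (x0 + s *: h)| < dl.
    rewrite dz normrZ.
    have a0 : 0 <= `|t - s| := normr_ge0 _.
    apply: (le_lt_trans (_ : _ <= `|t - s| * (`|h| + 1))).
      by rewrite ler_wpM2l // lerDl.
    by rewrite -ltr_pdivlMr.
  apply: (le_trans (Hdl _ Uz' hlt)).
  by rewrite dz normrZ le_eqVlt; apply/orP; left; apply/eqP; ring.
rewrite dz (linZ hi) (linZ lD) -scalerBl -scalerBr normrZ mulrC.
by apply: ler_wpM2r; [exact: normr_ge0 | apply: hc; apply: zr; rewrite s0 s1].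
Qed.

Lemma normB_le (R : realType) (V : normedModType R) (q a b : V) (k : R) :
  `|q - a| <= k -> `|q - b| <= k -> `|a - b| <= k + k.
Proof.
move=> ha hb; have -> : a - b = (q - b) - (q - a).
  by rewrite opprB [RHS]addrC addrA subrK.
by apply: le_trans (ler_normB _ _) _; rewrite lerD.
Qed.

Arguments normB_le {R V q a b k}.

Lemma deriv_unique (R : realType) (X X0 Y : normedModType R) (iota : X0 -> X)
  (hemb : densely_embedded iota) (U0 : set X0) (F : X0 -> Y) (x0 : X0) (r : R)
  (L1 L2 : X -> Y) : 0 < r ->
  (forall z, `|z - x0| < r -> U0 z) ->
  C1deriv_at iota U0 F x0 L1 -> C1deriv_at iota U0 F x0 L2 ->
  forall v, L1 v = L2 v.
Proof.
case: hemb => hi _ hd _ r0 hU [bl1 H1] [bl2 H2].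
have l1 := bl1.1; have l2 := bl2.1.
have step1 : forall w, L1 (iota w) = L2 (iota w).
  move=> w; apply/eqP; rewrite -subr_eq0 -normr_le0.
  apply: (@le_of_eps _ _ _ (`|w| + `|w|)); first by rewrite addr_ge0.
  move=> e e0; rewrite add0r.
  have [d1 d10 Hd1] := H1 e e0; have [d2 d20 Hd2] := H2 e e0.
  pose m := Num.min r (Num.min d1 d2).
  have m0 : 0 < m by rewrite !lt_min r0 d10 d20.
  have w1 : 0 < `|w| + 1 by rewrite ltr_pwDr // normr_ge0.
  pose s := m / (2 * (`|w| + 1)).
  have s0 : 0 < s by rewrite divr_gt0 // mulr_gt0.
  have sm : s * `|w| < m.
    rewrite /s mulrAC ltr_pdivrMr ?mulr_gt0 //.
    rewrite ltr_pM2l //; have := normr_ge0 w; lra.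
  have hx : `|(x0 + s *: w) - x0| < m.
    by rewrite addrAC subrr add0r normrZ gtr0_norm.
  have hxr : `|(x0 + s *: w) - x0| < r by apply: lt_le_trans hx _; rewrite ge_min lexx.
  have hx1 : `|(x0 + s *: w) - x0| < d1.
    by apply: lt_le_trans hx _; rewrite !ge_min lexx orbT.
  have hx2 : `|(x0 + s *: w) - x0| < d2.
    by apply: lt_le_trans hx _; rewrite !ge_min lexx !orbT.
  have := normB_le (Hd1 _ (hU _ hxr) hx1) (Hd2 _ (hU _ hxr) hx2).
  rewrite addrAC subrr add0r (linZ hi) (linZ l1) (linZ l2) -scalerBr normrZ.
  rewrite gtr0_norm // normrZ gtr0_norm // => hh.
  have : s * `|L1 (iota w) - L2 (iota w)| <= s * (e * (`|w| + `|w|)).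
    by apply: (le_trans hh); rewrite le_eqVlt; apply/orP; left; apply/eqP; ring.
  by rewrite ler_pM2l.
move=> v.
have [C1 C10 hC1] := bl_bound bl1; have [C2 C20 hC2] := bl_bound bl2.
apply/eqP; rewrite -subr_eq0 -normr_le0.
apply: (@le_of_eps _ _ _ (C1 + C2)); first by rewrite addr_ge0 // ltW.
move=> e e0; rewrite add0r.
have [y [by' [w _ wy]]] := hd (ball v e) (ex_intro _ v (ballxx v e0)) (ball_open v e).
move: by'; rewrite -ball_normE /= -wy => hvw.
have -> : L1 v - L2 v = L1 (v - iota w) - L2 (v - iota w).
  by rewrite (linB l1) (linB l2) step1 opprB addrA subrK.
apply: (le_trans (ler_normB _ _)).
apply: (le_trans (lerD (hC1 _) (hC2 _))).
rewrite -mulrDl mulrC ler_wpM2r ?addr_ge0 ?ltW //.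
Qed.

Lemma nbhd_lemma (R : realType) (X X0 : normedModType R) (M M0 : topologicalType)
  (j : M0 -> M) (iota : X0 -> X) (A : set (set M * (M -> X)))
  (hA : chart_family A) (hemb : C1_embedded j iota A)
  (c d e : set M * (M -> X)) (hc : A c) (hd : A d) (he : A e) (eta : M0)
  (phi0 psi0 : M0 -> X0)
  (hphi : local_chart (j @^-1` c.1) phi0) (hpsi : local_chart (j @^-1` d.1) psi0)
  (etac : c.1 (j eta)) (etad : d.1 (j eta)) (etae : e.1 (j eta))
  (eps : R) (eps0 : 0 < eps) :
  exists2 delta : R, 0 < delta & forall x, `|x - phi0 eta| < delta ->
    exists m, [/\ c.1 (j m), d.1 (j m), e.1 (j m), phi0 m = x &
                  `|psi0 m - psi0 eta| < eps].
Proof.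
case: hemb => _ [_ jopen] _ _ _.
have [oc _ _ _] := hA c hc; have [od _ _ _] := hA d hd; have [oe _ _ _] := hA e he.
have oVd : open (j @^-1` d.1) := jopen _ od.
have [_ _ cont _] := hpsi.
rewrite continuous_open_subspace // in cont.
have oB := (continuous_inP psi0 oVd).1 cont (ball (psi0 eta) eps) (ball_open _ _).
pose O := (j @^-1` d.1 `&` psi0 @^-1` ball (psi0 eta) eps) `&` j @^-1` e.1.
have oO : open O by apply: openI => //; exact: jopen.
have [_ _ _ hopen] := hphi.
have Sx : (phi0 @` (j @^-1` c.1 `&` O)) (phi0 eta).
  exists eta => //; split => //; split => //; split => //.
  exact: ballxx.
have [delta d0 hdel] := open_ball_ex (hopen O oO) Sx.
exists delta => // x /hdel [m [mc [[md mb] me]] <-].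
exists m; split => //.
by move: mb; rewrite /= -ball_normE /= distrC.
Qed.

Lemma trans_eq (R : realType) (X X0 : normedModType R) (M M0 : topologicalType)
  (j : M0 -> M) (iota : X0 -> X) (c d : set M * (M -> X)) (F1 F2 : X0 -> X) :
  is_transition j iota c d F1 -> is_transition j iota c d F2 ->
  forall x, trans_dom j iota c d x -> F1 x = F2 x.
Proof. by move=> t1 t2 x [m [hm hx]]; rewrite (t1 m x hm hx) (t2 m x hm hx). Qed.

Lemma C1deriv_ext (R : realType) (X X0 Y : normedModType R) (iota : X0 -> X)
  (U0 : set X0) (F1 F2 : X0 -> Y) (x0 : X0) (L : X -> Y) :
  (forall x, U0 x -> F1 x = F2 x) -> U0 x0 ->
  C1deriv_at iota U0 F1 x0 L -> C1deriv_at iota U0 F2 x0 L.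
Proof.
move=> hF hx0 [bl H]; split => // e e0.
have [d d0 Hd] := H e e0; exists d => // x Ux hx.
by rewrite -(hF x Ux) -(hF x0 hx0); apply: Hd.
Qed.

Arguments nbhd_lemma {R X X0 M M0 j iota A} hA hemb {c d e} hc hd he {eta phi0 psi0}
  hphi hpsi etac etad etae {eps} eps0.
Arguments deriv_unique {R X X0 Y iota} hemb {U0 F x0 r L1 L2}.
Arguments trans_eq {R X X0 M M0 j iota c d F1 F2}.
Arguments C1deriv_ext {R X X0 Y iota U0 F1 F2 x0 L}.
Arguments mvl {R X X0 iota} hi {U0 F D x0 r eps h}.

Lemma chain (R : realType) (X X0 : normedModType R) (M M0 : topologicalType)
  (j : M0 -> M) (iota : X0 -> X) (A : set (set M * (M -> X)))
  (hA : chart_family A) (hemb : C1_embedded j iota A)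
  (c d e : set M * (M -> X)) (hc : A c) (hd : A d) (he : A e) (eta : M0)
  (etac : c.1 (j eta)) (etad : d.1 (j eta)) (etae : e.1 (j eta))
  (xc xd : X0) (hxc : iota xc = c.2 (j eta)) (hxd : iota xd = d.2 (j eta))
  (G H K : X0 -> X)
  (tG : is_transition j iota c d G) (tH : is_transition j iota d e H)
  (tK : is_transition j iota c e K)
  (Lcd Lde Lce : X -> X)
  (dG : C1deriv_at iota (trans_dom j iota c d) G xc Lcd)
  (dH : C1deriv_at iota (trans_dom j iota d e) H xd Lde)
  (dK : C1deriv_at iota (trans_dom j iota c e) K xc Lce) :
  forall v, Lce v = Lde (Lcd v).
Proof.
have hemb' := hemb.
case: hemb => hdense [jinj jopen] _ hD4 hD5.
have hdense' := hdense.
case: hdense => hi iinj _ [Ci Ci0 hCi].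
have [phi0 [hphi0 lphi]] := hD4 eta c hc etac.
have [psi0 [hpsi0 lpsi]] := hD4 eta d hd etad.
have ephi : phi0 eta = xc by apply: iinj; rewrite hphi0 // hxc.
have epsi : psi0 eta = xd by apply: iinj; rewrite hpsi0 // hxd.
have [[H' [tH' [D [hDd hDc]]]] _] := hD5 eta d e hd he etad etae.
have [r1 r10 hr1] := nbhd_lemma hA hemb' hd hd he lpsi lpsi etad etad etae ltr01.
have Ude : forall z, `|z - xd| < r1 -> trans_dom j iota d e z.
  move=> z; rewrite -epsi => /hr1 [m [md _ me <- _]].
  by exists m; split => //; rewrite hpsi0.
have [rc rc0 hrc] := nbhd_lemma hA hemb' hc hc he lphi lphi etac etac etae ltr01.
have Uce : forall z, `|z - xc| < rc -> trans_dom j iota c e z.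
  move=> z; rewrite -ephi => /hrc [m [mc _ me <- _]].
  by exists m; split => //; rewrite hphi0.
have xdU : trans_dom j iota d e xd by apply: Ude; rewrite subrr normr0.
have eHH := trans_eq tH tH'.
have dH' := C1deriv_ext eHH xdU dH.
have eD : forall v, D xd v = Lde v :=
  deriv_unique hdense' r10 Ude (hDd xd xdU) dH'.
have [[lcd _] _] := dG; have [[lde _] _] := dH.
have [Ccd Ccd0 hCcd] := bl_bound dG.1.
have [Cde Cde0 hCde] := bl_bound dH.1.
have dcomp : C1deriv_at iota (trans_dom j iota c e) K xc (fun v => Lde (Lcd v)).
  split.
    split; first by move=> a u v /=; rewrite lcd lde.
    exists (Cde * Ccd) => v; apply: (le_trans (hCde _)).
    by rewrite -mulrA; apply: ler_wpM2l; [exact: ltW | exact: hCcd].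
  move=> eps eps0.
  pose Aa := Ccd * Ci + 1.
  have Aa0 : 0 < Aa by rewrite ltr_pwDr // mulr_ge0 // ltW.
  pose e2 := eps / (2 * Aa).
  have e20 : 0 < e2 by rewrite divr_gt0 // mulr_gt0.
  pose e1 := eps / (2 * Cde).
  have e10 : 0 < e1 by rewrite divr_gt0 // mulr_gt0.
  have [dc dc0 Hdc] := hDc xd xdU e2 e20.
  pose rM := Num.min r1 dc.
  have rM0 : 0 < rM by rewrite lt_min r10 dc0.
  have hM : forall z, `|z - xd| < rM -> trans_dom j iota d e z.
    by move=> z hz; apply: Ude; apply: lt_le_trans hz _; rewrite ge_min lexx.
  have hMc : forall z, `|z - xd| < rM -> forall v, `|D z v - D xd v| <= e2 * `|v|.
    move=> z hz; apply: Hdc.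
      by apply: hM.
    by apply: lt_le_trans hz _; rewrite ge_min lexx orbT.
  have MV := mvl hi hM hDd hMc.
  have [da da0 Hda] := dG.2 1 ltr01.
  have [db db0 Hdb] := dG.2 e1 e10.
  have [dn dn0 Hdn] := nbhd_lemma hA hemb' hc hd he lphi lpsi etac etad etae rM0.
  exists (Num.min da (Num.min db dn)); first by rewrite !lt_min da0 db0 dn0.
  move=> x _ hx.
  have hxa : `|x - xc| < da by apply: lt_le_trans hx _; rewrite ge_min lexx.
  have hxb : `|x - xc| < db by apply: lt_le_trans hx _; rewrite !ge_min lexx orbT.
  have hxn : `|x - xc| < dn by apply: lt_le_trans hx _; rewrite !ge_min lexx !orbT.
  move: hxn; rewrite -ephi => /Hdn [m [mc md me emx]].
  rewrite ephi epsi => hym.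
  have ix : iota x = c.2 (j m) by rewrite -emx hphi0.
  pose y := psi0 m.
  have iy : iota y = d.2 (j m) by rewrite hpsi0.
  have Gx : G x = iota y by rewrite (tG m x (conj mc md) ix) iy.
  have Gxc : G xc = iota xd by rewrite (tG eta xc (conj etac etad) hxc) hxd.
  have Kx : K x = H' (xd + (y - xd)).
    by rewrite addrC subrK (tK m x (conj mc me) ix) (tH' m y (conj md me) iy).
  have Kxc : K xc = H' xd.
    by rewrite (tK eta xc (conj etac etae) hxc) (tH' eta xd (conj etad etae) hxd).
  have xU : trans_dom j iota c d x by exists m; split.
  have hG1 := Hda x xU hxa.
  have hG2 := Hdb x xU hxb.
  have hMV := MV (y - xd) hym; rewrite eD in hMV.
  have ihh : iota (y - xd) = G x - G xc by rewrite (linB hi) Gx Gxc.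
  rewrite Kx Kxc.
  have -> : H' (xd + (y - xd)) - H' xd - Lde (Lcd (iota (x - xc))) =
     (H' (xd + (y - xd)) - H' xd - Lde (iota (y - xd))) +
     Lde (iota (y - xd) - Lcd (iota (x - xc))).
    by rewrite (linB lde) [_ + (Lde _ - _)]addrA subrK.
  apply: (le_trans (ler_normD _ _)).
  have t0 : 0 <= `|x - xc| := normr_ge0 _.
  have b1 : `|G x - G xc| <= Aa * `|x - xc|.
    have -> : G x - G xc = (G x - G xc - Lcd (iota (x - xc))) + Lcd (iota (x - xc)).
      by rewrite subrK.
    apply: (le_trans (ler_normD _ _)).
    have b2 : `|Lcd (iota (x - xc))| <= Ccd * Ci * `|x - xc|.
      apply: (le_trans (hCcd _)); rewrite -mulrA.
      by apply: ler_wpM2l; [exact: ltW | exact: hCi].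
    have := lerD hG1 b2; move/le_trans; apply.
    by rewrite /Aa mulrDl mul1r addrC.
  have s1 : `|H' (xd + (y - xd)) - H' xd - Lde (iota (y - xd))| <= eps / 2 * `|x - xc|.
    apply: (le_trans hMV); rewrite ihh.
    apply: (le_trans (ler_wpM2l (ltW e20) b1)).
    rewrite mulrA (_ : e2 * Aa = eps / 2) //.
    rewrite /e2; field; rewrite ?lt0r_neq0 //.
  have s2 : `|Lde (iota (y - xd) - Lcd (iota (x - xc)))| <= eps / 2 * `|x - xc|.
    apply: (le_trans (hCde _)); rewrite ihh.
    apply: (le_trans (ler_wpM2l (ltW Cde0) hG2)).
    rewrite mulrA (_ : Cde * e1 = eps / 2) //.
    rewrite /e1; field; rewrite ?lt0r_neq0 //.
  have := lerD s1 s2; move/le_trans; apply.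
  by rewrite -mulrDl -splitr.
move=> v; have := deriv_unique hdense' rc0 Uce dK dcomp v.
by [].
Qed.

Arguments chain {R X X0 M M0 j iota A} hA hemb {c d e} hc hd he {eta} etac etad etae
  {xc xd} hxc hxd {G H K} tG tH tK {Lcd Lde Lce} dG dH dK.

Lemma id_deriv (R : realType) (X X0 : normedModType R) (iota : X0 -> X)
  (hi : forall (a : R) u v, iota (a *: u + v) = a *: iota u + iota v)
  (U0 : set X0) (x0 : X0) : C1deriv_at iota U0 iota x0 id.
Proof.
split.
  by split => //; exists 1 => v; rewrite mul1r.
move=> e e0; exists 1 => // x _ _.
by rewrite -(linB hi) subrr normr0 mulr_ge0 // ltW.
Qed.
Arguments id_deriv {R X X0 iota} hi U0 x0.

Theorem lemma2p3 (R : realType)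
    (X X0 X1 : completeNormedModType R)
    (M M0 M1 : topologicalType)
    (iota : X0 -> X) (j : M0 -> M) (iota1 : X1 -> X0) (j1 : M1 -> M0)
    (A : set (set M * (M -> X)))
    (hM : banach_manifold M X) (hM0 : banach_manifold M0 X0)
    (hM1 : banach_manifold M1 X1)
    (hA : chart_family A)
    (hemb : C1_embedded j iota A)
    (hkernel : C1_embedded j1 iota1 (restr_family j iota A))
    (eta : M0)
    (cphi cpsi cchi : set M * (M -> X))
    (hphi : A cphi) (hpsi : A cpsi) (hchi : A cchi)
    (etaphi : cphi.1 (j eta)) (etapsi : cpsi.1 (j eta))
    (etachi : cchi.1 (j eta))
    (xphi xpsi xchi : X0)
    (hxphi : iota xphi = cphi.2 (j eta))
    (hxpsi : iota xpsi = cpsi.2 (j eta))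
    (hxchi : iota xchi = cchi.2 (j eta))
    (Fphichi Fphipsi Fpsichi Fpsiphi : X0 -> X)
    (tphichi : is_transition j iota cchi cphi Fphichi)
    (tphipsi : is_transition j iota cpsi cphi Fphipsi)
    (tpsichi : is_transition j iota cchi cpsi Fpsichi)
    (tpsiphi : is_transition j iota cphi cpsi Fpsiphi)
    (Lphichi Lphipsi Lpsichi Lpsiphi : X -> X)
    (dphichi : C1deriv_at iota (trans_dom j iota cchi cphi) Fphichi xchi Lphichi)
    (dphipsi : C1deriv_at iota (trans_dom j iota cpsi cphi) Fphipsi xpsi Lphipsi)
    (dpsichi : C1deriv_at iota (trans_dom j iota cchi cpsi) Fpsichi xchi Lpsichi)
    (dpsiphi : C1deriv_at iota (trans_dom j iota cphi cpsi) Fpsiphi xphi Lpsiphi) :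
  (forall v : X, Lphichi v = Lphipsi (Lpsichi v)) /\
  (forall v : X, Lphipsi (Lpsiphi v) = v) /\
  (forall v : X, Lpsiphi (Lphipsi v) = v).
Proof.
Proof.
have hi : forall (a : R) u v, iota (a *: u + v) = a *: iota u + iota v.
  by case: hemb => -[].
have tid : forall c, is_transition j iota c c iota by move=> c m x _ hx.
split.
  move=> v.
  exact: (chain hA hemb hchi hpsi hphi etachi etapsi etaphi hxchi hxpsi
    tpsichi tphipsi tphichi dpsichi dphipsi dphichi v).
split.
  move=> v; symmetry.
  have := (chain hA hemb hphi hpsi hphi etaphi etapsi etaphi hxphi hxpsi
    tpsiphi tphipsi (tid _) dpsiphi dphipsi (id_deriv hi _ _) v).
  by [].
move=> v; symmetry.
have := (chain hA hemb hpsi hphi hpsi etapsi etaphi etapsi hxpsi hxphi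
  tphipsi tpsiphi (tid _) dphipsi dpsiphi (id_deriv hi _ _) v).
by [].
Qed.
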